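(* Let $(\varphi_n)_{n\ge0}$ be vectors in $\mathbb{R}^d$, $r_0=1$, $r_n=1+\sum_{i=1}^n\|\varphi_i\|^2$, and assume $r_n\to\infty$ and $r_n=O(r_{n-1})$. Then there exist a constant $l\ge 1$ and a strictly increasing sequence of nonnegative integers $(t_k)_{k\ge0}$ such that for all $k\ge1$ $$\frac{k}{l}<\frac{r_{t_k}}{r_{t_{k-1}}}<lk,$$ i.e. $r_{t_k}=\Theta(k\,r_{t_{k-1}})$.
   Context: $r_n=O(r_{n-1})$ means there is a constant $C$ with $r_n\le C r_{n-1}$ for all $n\ge1$. *)

(* Defs.v *)
From HB Require Import structures.
From mathcomp Require Import all_boot all_order all_algebra.
From mathcomp Require Import reals.
Set Implicit Arguments. Unset Strict Implicit. Unset Printing Implicit Defensive.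
Import Order.TTheory GRing.Theory Num.Theory.
Local Open Scope ring_scope.

Definition sqnorm (R : realType) (d : nat) (v : 'rV[R]_d) : R :=
  \sum_(j < d) (v 0 j) ^+ 2.

Definition rseq (R : realType) (d : nat) (phi : nat -> 'rV[R]_d) (n : nat) : R :=
  1 + \sum_(1 <= i < n.+1) sqnorm (phi i).

(* Main.v *)
Require Import Defs.
From HB Require Import structures.
From mathcomp Require Import all_boot all_order all_algebra.
From mathcomp Require Import reals.
From mathcomp Require Import lra zify.
Import Order.TTheory GRing.Theory Num.Theory.
Local Open Scope ring_scope.

Lemma rseq_S (R : realType) (d : nat) (phi : nat -> 'rV[R]_d) n :
  rseq phi n.+1 = rseq phi n + sqnorm (phi n.+1).
Proof. by rewrite /rseq big_nat_recr //= addrA. Qed.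

Lemma sqnorm_ge0 (R : realType) (d : nat) (v : 'rV[R]_d) : 0 <= sqnorm v.
Proof. by apply: sumr_ge0 => i _; rewrite sqr_ge0. Qed.

Lemma rseq_mono (R : realType) (d : nat) (phi : nat -> 'rV[R]_d) n m :
  (n <= m)%N -> rseq phi n <= rseq phi m.
Proof.
move/subnK => <-; elim: (m - n)%N => [|k IH]; first by rewrite add0n.
rewrite addSn rseq_S; apply: le_trans IH _; rewrite lerDl; exact: sqnorm_ge0.
Qed.

Lemma rseq_ge1 (R : realType) (d : nat) (phi : nat -> 'rV[R]_d) n :
  1 <= rseq phi n.
Proof. rewrite /rseq lerDl; apply: sumr_ge0 => i _; exact: sqnorm_ge0. Qed.

Theorem mainTheorem4 (R : realType) (d : nat) (phi : nat -> 'rV[R]_d) :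
  (forall M : R, exists N : nat, forall n : nat, (N <= n)%N -> M <= rseq phi n) ->
  (exists C : R, forall n : nat, (1 <= n)%N -> rseq phi n <= C * rseq phi n.-1) ->
  exists (l : R) (t : nat -> nat),
    1 <= l /\ (forall k : nat, (t k < t k.+1)%N) /\
    (forall k : nat, (1 <= k)%N ->
       k%:R / l < rseq phi (t k) / rseq phi (t k.-1) /\
       rseq phi (t k) / rseq phi (t k.-1) < l * k%:R).
Proof.
move=> Hdiv [C HC].
set r := rseq phi.
have r1 : forall n, 1 <= r n by move=> n; exact: rseq_ge1.
have r0 : forall n, 0 < r n by move=> n; apply: lt_le_trans (r1 n).
have rm : forall n m, (n <= m)%N -> r n <= r m by move=> n m; exact: rseq_mono.
have C1 : 1 <= C.
  have e0 : r 0%N = 1 by rewrite /r /rseq big_geq // addr0.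
  have := HC 1%N isT; change (r 1%N <= C * r 0%N -> 1 <= C); rewrite e0 mulr1.
  by apply: le_trans; exact: r1.
pose P (k t : nat) := fun n => (t < n)%N && (k%:R * r t <= r n).
have ex : forall k t, exists n, P k t n.
  move=> k t; have [N HN] := Hdiv (k%:R * r t).
  exists (maxn N t.+1); apply/andP; split.
    by rewrite leq_max leqnn orbT.
  by apply: HN; rewrite leq_maxl.
pose nxt k t := ex_minn (ex k t).
pose t := fix tt k := match k with 0 => 0%N | k'.+1 => nxt k'.+1 (tt k') end.
have key : forall k tk, let n := nxt k tk in
   [/\ (tk < n)%N, k%:R * r tk <= r n & r n <= C * (k%:R * r tk)] \/ (k = 0%N).
  move=> k tk /=; case: k => [|k]; [by right|left].
  rewrite /nxt; case: ex_minnP => n /andP[ltn len] Hmin.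
  split => //.
  have n1 : (1 <= n)%N by apply: leq_ltn_trans ltn.
  apply: le_trans (HC n n1) _; rewrite ler_wpM2l //; first by apply: le_trans C1.
  case: (ltngtP tk n.-1) => h.
  - case Pm: (P k.+1 tk n.-1).
      by have := Hmin _ Pm; rewrite -subn1; move: n1; clear; lia.
    move: Pm; rewrite /P h /= => /negbT; rewrite -ltNge => /ltW //.
  - by move: ltn h; clear; lia.
  - have := ltW (r0 tk); have : 1 <= k.+1%:R :> R by rewrite (ler_nat R 1 k.+1).
    rewrite -h -/r; nra.
exists (C + 1), t; split; first by lra.
split.
  by move=> k /=; have [[]|] := key k.+1 (t k).
case=> [//|k] _ /=.
have [[_ lo hi]|//] := key k.+1 (t k).
have rt := r0 (t k).
have kp : 0 < (k.+1)%:R :> R by rewrite ltr0n.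
set a := r (nxt _ _) in lo hi *.
have qlo : (k.+1)%:R <= a / r (t k) by rewrite ler_pdivlMr.
have qhi : a / r (t k) <= C * (k.+1)%:R by rewrite ler_pdivrMr // -mulrA.
have lp : 0 < C + 1 by lra.
set q := a / r (t k) in qlo qhi *.
set K := (k.+1)%:R in kp qlo qhi *.
have qC : q <= q * C by rewrite -{1}(mulr1 q) ler_wpM2l //; lra.
split; last by rewrite mulrDl mul1r; lra.
rewrite ltr_pdivrMr // mulrDr mulr1; lra.
Qed.
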